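(* Let $P \in S$ have degree $n > 0$ in $x$. Then there exist $n$ elements of $S$ that generate $C_S(P)$ as a $K$-algebra.
   Context: Standing conventions: $K$ is a field, $R = K[y]$, $\sigma$ is a $K$-algebra endomorphism of $R$ with $\deg_y(\sigma(y)) > 1$, and $\delta$ is a $K$-linear $\sigma$-derivation of $R$ ($\delta(ab) = \sigma(a)\delta(b) + \delta(a)b$). $S = R[x;\sigma,\delta]$ is the Ore extension (polynomials $\sum r_i x^i$, $r_i\in R$, with $xr = \sigma(r)x + \delta(r)$). $C_S(P)$ is the centralizer of $P$ in $S$. *)

(* Defs.v *)
From HB Require Import structures.
From mathcomp Require Import all_boot all_order all_algebra.
Set Implicit Arguments. Unset Strict Implicit. Unset Printing Implicit Defensive.
Import Order.TTheory GRing.Theory Num.Theory.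
Local Open Scope ring_scope.

(* R = K[y] is {poly K}; elements of S = R[x; sigma, delta] are represented by
   their coefficient sequences  sum_i r_i x^i  as {poly {poly K}}
   (the outer variable standing for x, coefficients r_i written on the left).
   Only the additive structure of {poly {poly K}} is used; the Ore product is
   [ore_mul] below. *)

Definition is_Kalg_endo (K : fieldType) (sigma : {poly K} -> {poly K}) : Prop :=
  [/\ forall a b, sigma (a + b) = sigma a + sigma b,
      forall a b, sigma (a * b) = sigma a * sigma b,
      sigma 1 = 1 &
      forall (c : K) a, sigma (c *: a) = c *: sigma a].

Definition is_sigma_derivation (K : fieldType)
    (sigma delta : {poly K} -> {poly K}) : Prop :=
  [/\ forall a b, delta (a + b) = delta a + delta b,
      forall (c : K) a, delta (c *: a) = c *: delta a &
      forall a b, delta (a * b) = sigma a * delta b + delta a * b].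

(* left multiplication by x in S:  x * (sum q_j x^j) = sum (sigma q_j x^(j+1) + delta q_j x^j) *)
Definition ore_xmul (K : fieldType) (sigma delta : {poly K} -> {poly K})
    (q : {poly {poly K}}) : {poly {poly K}} :=
  map_poly sigma q * 'X + map_poly delta q.

Definition ore_mul (K : fieldType) (sigma delta : {poly K} -> {poly K})
    (p q : {poly {poly K}}) : {poly {poly K}} :=
  \sum_(i < size p) (p`_i)%:P * iter i (ore_xmul sigma delta) q.

Definition centralizer (K : fieldType) (sigma delta : {poly K} -> {poly K})
    (P : {poly {poly K}}) : {poly {poly K}} -> Prop :=
  fun Q => ore_mul sigma delta P Q = ore_mul sigma delta Q P.

Inductive in_gen_alg (K : fieldType) (sigma delta : {poly K} -> {poly K})
    (G : {poly {poly K}} -> Prop) : {poly {poly K}} -> Prop :=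
  | ga_const (c : K) : in_gen_alg sigma delta G (c%:P)%:P
  | ga_gen Q : G Q -> in_gen_alg sigma delta G Q
  | ga_add Q1 Q2 : in_gen_alg sigma delta G Q1 -> in_gen_alg sigma delta G Q2 ->
      in_gen_alg sigma delta G (Q1 + Q2)
  | ga_mul Q1 Q2 : in_gen_alg sigma delta G Q1 -> in_gen_alg sigma delta G Q2 ->
      in_gen_alg sigma delta G (ore_mul sigma delta Q1 Q2).

(* Main.v *)
Require Import Defs.
From HB Require Import structures.
From mathcomp Require Import all_boot all_order all_algebra zify.
From Stdlib Require Import Classical ClassicalEpsilon.
Set Implicit Arguments. Unset Strict Implicit. Unset Printing Implicit Defensive.
Import GRing.Theory.
Local Open Scope ring_scope.

Lemma sig0 (K : fieldType) (s : {poly K} -> {poly K}) :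
  is_Kalg_endo s -> s 0 = 0.
Proof. by case=> sD _ _ _; apply: (addrI (s 0)); rewrite addr0 -sD addr0. Qed.

Lemma sigN (K : fieldType) (s : {poly K} -> {poly K}) a :
  is_Kalg_endo s -> s (- a) = - s a.
Proof.
move=> H; have:= sig0 H; case: H => sD _ _ _ h0.
by apply/eqP; rewrite -subr_eq0 opprK -sD addNr h0.
Qed.

Lemma sigC (K : fieldType) (s : {poly K} -> {poly K}) c :
  is_Kalg_endo s -> s c%:P = c%:P.
Proof. case=> _ _ s1 sZ; by rewrite -alg_polyC sZ s1 alg_polyC. Qed.

Lemma del0 (K : fieldType) (s d : {poly K} -> {poly K}) :
  is_sigma_derivation s d -> d 0 = 0.
Proof. by case=> dD _ _; apply: (addrI (d 0)); rewrite addr0 -dD addr0. Qed.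

Lemma delN (K : fieldType) (s d : {poly K} -> {poly K}) a :
  is_sigma_derivation s d -> d (- a) = - d a.
Proof.
move=> H; have:= del0 H; case: H => dD _ _ h0.
by apply/eqP; rewrite -subr_eq0 opprK -dD addNr h0.
Qed.

Lemma delC (K : fieldType) (s d : {poly K} -> {poly K}) c :
  is_Kalg_endo s -> is_sigma_derivation s d -> d c%:P = 0.
Proof.
move=> Hs [dD dZ dM]; have d1 : d 1 = 0.
  have := dM 1 1; rewrite mulr1; case: Hs => _ _ -> _; rewrite mul1r.
  by rewrite mulr1 => h; apply: (addrI (d 1)); rewrite addr0 -h.
by rewrite -alg_polyC dZ d1 scaler0.
Qed.

Lemma sig_comp (K : fieldType) (s : {poly K} -> {poly K}) f :
  is_Kalg_endo s -> s f = f \Po s 'X.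
Proof.
move=> H; elim/poly_ind: f => [|p c IH]; first by rewrite sig0 // comp_poly0.
have hC := sigC c H; case: H => sD sM _ _.
by rewrite sD sM IH hC comp_polyD comp_polyM comp_polyX comp_polyC.
Qed.

Lemma iter_endo (K : fieldType) (s : {poly K} -> {poly K}) k :
  is_Kalg_endo s -> is_Kalg_endo (iter k s).
Proof.
move=> H; elim: k => [|k [iD iM i1 iZ]]; first by split.
case: H => sD sM s1 sZ; split => /=.
- by move=> a b; rewrite iD sD.
- by move=> a b; rewrite iM sM.
- by rewrite i1 s1.
- by move=> c a; rewrite iZ sZ.
Qed.

Lemma sig_size (K : fieldType) (s : {poly K} -> {poly K}) f :
  is_Kalg_endo s -> (size (s f)).-1 = ((size f).-1 * (size (s 'X)).-1)%N.
Proof. by move=> H; rewrite sig_comp // size_comp_poly. Qed.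

Lemma sig_eq0 (K : fieldType) (s : {poly K} -> {poly K}) f :
  is_Kalg_endo s -> (1 < size (s 'X))%N -> (s f == 0) = (f == 0).
Proof. by move=> H h; rewrite sig_comp // comp_poly_eq0. Qed.

Lemma iter_size (K : fieldType) (s : {poly K} -> {poly K}) k f :
  is_Kalg_endo s ->
  (size (iter k s f)).-1 = ((size f).-1 * (size (s 'X)).-1 ^ k)%N.
Proof.
move=> H; elim: k => [|k IH]; first by rewrite muln1.
by rewrite iterS sig_size // IH expnS mulnCA mulnC.
Qed.

Lemma iter_eq0 (K : fieldType) (s : {poly K} -> {poly K}) k f :
  is_Kalg_endo s -> (1 < size (s 'X))%N -> (iter k s f == 0) = (f == 0).
Proof.
move=> H h; elim: k => [|k IH] //.
by rewrite iterS sig_eq0.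
Qed.

Lemma size_map_le (K : fieldType) (f : {poly K} -> {poly K}) (p : {poly {poly K}}) :
  f 0 = 0 -> (size (map_poly f p) <= size p)%N.
Proof.
move=> f0; apply/leq_sizeP => j hj; rewrite coef_map_id0 //.
by rewrite nth_default // f0.
Qed.

Lemma coef_xm (K : fieldType) (s d : {poly K} -> {poly K}) q i :
  is_Kalg_endo s -> is_sigma_derivation s d ->
  (ore_xmul s d q)`_i = (if i is j.+1 then s q`_j else 0) + d q`_i.
Proof.
move=> Hs Hd; rewrite /ore_xmul coefD coefMX !coef_map_id0 ?(sig0 Hs) ?(del0 Hd) //.
by case: i.
Qed.

Lemma xmD (K : fieldType) (s d : {poly K} -> {poly K}) p q :
  is_Kalg_endo s -> is_sigma_derivation s d ->
  ore_xmul s d (p + q) = ore_xmul s d p + ore_xmul s d q.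
Proof.
move=> Hs Hd; apply/polyP => i; rewrite coefD !coef_xm // !coefD.
have [sD _ _ _] := Hs; have [dD _ _] := Hd.
case: i => [|i]; rewrite ?add0r ?dD //; by rewrite coefD sD addrACA.
Qed.

Lemma xm0 (K : fieldType) (s d : {poly K} -> {poly K}) :
  is_Kalg_endo s -> is_sigma_derivation s d -> ore_xmul s d 0 = 0.
Proof.
move=> Hs Hd; apply/polyP => i; rewrite coef_xm // coef0 (del0 Hd).
by case: i => [|i]; rewrite ?coef0 ?(sig0 Hs) addr0.
Qed.

Lemma xmC (K : fieldType) (s d : {poly K} -> {poly K}) a Z :
  is_Kalg_endo s -> is_sigma_derivation s d ->
  ore_xmul s d (a%:P * Z) = (s a)%:P * ore_xmul s d Z + (d a)%:P * Z.
Proof.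
move=> Hs Hd; apply/polyP => i; rewrite coef_xm // [RHS]coefD !coefCM coef_xm //.
have [_ sM _ _] := Hs; have [_ _ dM] := Hd.
case: i => [|i]; rewrite ?coefCM ?mulr0 ?add0r ?dM //. by rewrite sM mulrDr addrA.
Qed.

Lemma iter_xmD (K : fieldType) (s d : {poly K} -> {poly K}) k p q :
  is_Kalg_endo s -> is_sigma_derivation s d ->
  iter k (ore_xmul s d) (p + q) = iter k (ore_xmul s d) p + iter k (ore_xmul s d) q.
Proof. by move=> Hs Hd; elim: k => [|k IH] //=; rewrite IH xmD. Qed.

Lemma iter_xm0 (K : fieldType) (s d : {poly K} -> {poly K}) k :
  is_Kalg_endo s -> is_sigma_derivation s d -> iter k (ore_xmul s d) 0 = 0.
Proof. by move=> Hs Hd; elim: k => [|k IH] //=; rewrite IH xm0. Qed.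

Lemma xm_size (K : fieldType) (s d : {poly K} -> {poly K}) q :
  is_Kalg_endo s -> is_sigma_derivation s d -> (1 < size (s 'X))%N -> q != 0 ->
  size (ore_xmul s d q) = (size q).+1 /\
  lead_coef (ore_xmul s d q) = s (lead_coef q).
Proof.
move=> Hs Hd hX q0.
have sl : s (lead_coef q) != 0 by rewrite sig_eq0 // lead_coef_eq0.
have hs : size (map_poly s q) = size q by rewrite size_map_poly_id0.
have m0 : map_poly s q != 0 by rewrite -size_poly_eq0 hs size_poly_eq0.
have hlt : (size (map_poly d q) < size (map_poly s q * 'X)%R)%N.
  by rewrite size_mulX // hs ltnS; apply: size_map_le; exact: (del0 Hd).
rewrite /ore_xmul; split.
  by rewrite size_addl // size_mulX // hs.
by rewrite lead_coefDl // lead_coefMX lead_coef_map_id0 // (sig0 Hs).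
Qed.

Lemma iter_xm_size (K : fieldType) (s d : {poly K} -> {poly K}) k q :
  is_Kalg_endo s -> is_sigma_derivation s d -> (1 < size (s 'X))%N -> q != 0 ->
  size (iter k (ore_xmul s d) q) = (size q + k)%N /\
  lead_coef (iter k (ore_xmul s d) q) = iter k s (lead_coef q).
Proof.
move=> Hs Hd hX q0; elim: k => [|k [IH1 IH2]]; first by rewrite addn0.
have nz : iter k (ore_xmul s d) q != 0.
  by rewrite -size_poly_eq0 IH1 addn_eq0 size_poly_eq0 (negbTE q0).
have [h1 h2] := xm_size Hs Hd hX nz.
by rewrite !iterS h1 h2 IH1 IH2 addnS.
Qed.

Lemma ore_mulE (K : fieldType) (s d : {poly K} -> {poly K}) (p q : {poly {poly K}}) N :
  (size p <= N)%N ->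
  ore_mul s d p q = \sum_(i < N) (p`_i)%:P * iter i (ore_xmul s d) q.
Proof.
move=> hN; rewrite /ore_mul (big_ord_widen _ (fun i : nat => (p`_i)%:P * iter i (ore_xmul s d) q) hN) big_mkcond /=.
apply: eq_bigr => i _; case: ifP => // /negbT; rewrite -leqNgt => h.
by rewrite nth_default // mul0r.
Qed.

Lemma ore_mul0l (K : fieldType) (s d : {poly K} -> {poly K}) (q : {poly {poly K}}) :
  ore_mul s d 0 q = 0.
Proof. by rewrite /ore_mul size_poly0 big_ord0. Qed.

Lemma ore_mulDl (K : fieldType) (s d : {poly K} -> {poly K}) (p1 p2 q : {poly {poly K}}) :
  ore_mul s d (p1 + p2) q = ore_mul s d p1 q + ore_mul s d p2 q.
Proof.
set N := maxn (size p1) (size p2).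
have h1 : (size p1 <= N)%N by rewrite leq_maxl.
have h2 : (size p2 <= N)%N by rewrite leq_maxr.
have h3 : (size (p1 + p2)%R <= N)%N by apply: leq_trans (size_polyD _ _) _; rewrite geq_max h1 h2.
rewrite (ore_mulE _ _ _ h1) (ore_mulE _ _ _ h2) (ore_mulE _ _ _ h3) -big_split /=.
by apply: eq_bigr => i _; rewrite coefD polyCD mulrDl.
Qed.

Lemma ore_mulDr (K : fieldType) (s d : {poly K} -> {poly K}) (p q1 q2 : {poly {poly K}}) :
  is_Kalg_endo s -> is_sigma_derivation s d ->
  ore_mul s d p (q1 + q2) = ore_mul s d p q1 + ore_mul s d p q2.
Proof.
move=> Hs Hd; rewrite /ore_mul -big_split /=.
by apply: eq_bigr => i _; rewrite iter_xmD // mulrDr.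
Qed.

Lemma ore_mul0r (K : fieldType) (s d : {poly K} -> {poly K}) (p : {poly {poly K}}) :
  is_Kalg_endo s -> is_sigma_derivation s d -> ore_mul s d p 0 = 0.
Proof.
move=> Hs Hd; rewrite /ore_mul big1 // => i _; by rewrite iter_xm0 // mulr0.
Qed.

Lemma ore_mulC (K : fieldType) (s d : {poly K} -> {poly K}) (a : {poly K}) (q : {poly {poly K}}) :
  ore_mul s d a%:P q = a%:P * q.
Proof.
rewrite (@ore_mulE _ _ _ _ _ 1) ?size_polyC ?leq_b1 //.
by rewrite big_ord1 coefC.
Qed.

Lemma ore_mulCl (K : fieldType) (s d : {poly K} -> {poly K}) (a : {poly K}) (p q : {poly {poly K}}) :
  ore_mul s d (a%:P * p) q = a%:P * ore_mul s d p q.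
Proof.
have h : (size (a%:P * p)%R <= size p)%N.
  by rewrite mul_polyC; apply: size_scale_leq.
rewrite (ore_mulE _ _ _ h) /ore_mul mulr_sumr; apply: eq_bigr => i _.
by rewrite coefCM polyCM mulrA.
Qed.

Lemma ore_mulX (K : fieldType) (s d : {poly K} -> {poly K}) (A r : {poly {poly K}}) :
  ore_mul s d (A * 'X) r = ore_mul s d A (ore_xmul s d r).
Proof.
have h : (size (A * 'X)%R <= (size A).+1)%N.
  have [->|A0] := eqVneq A 0; first by rewrite mul0r size_poly0.
  by rewrite size_mulX.
rewrite (ore_mulE _ _ _ h) big_ord_recl coefMX /= polyC0 mul0r add0r.
by apply: eq_bigr => i _; rewrite coefMX /= add0n -iterS iterSr.
Qed.

Lemma ore_mul_sum (K : fieldType) (s d : {poly K} -> {poly K}) (I : Type)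
    (r : seq I) (F : I -> {poly {poly K}}) q :
  ore_mul s d (\sum_(i <- r) F i) q = \sum_(i <- r) ore_mul s d (F i) q.
Proof.
elim: r => [|x r IH]; first by rewrite !big_nil ore_mul0l.
by rewrite !big_cons ore_mulDl IH.
Qed.

Lemma xm_sum (K : fieldType) (s d : {poly K} -> {poly K}) (I : Type)
    (r : seq I) (F : I -> {poly {poly K}}) :
  is_Kalg_endo s -> is_sigma_derivation s d ->
  ore_xmul s d (\sum_(i <- r) F i) = \sum_(i <- r) ore_xmul s d (F i).
Proof.
move=> Hs Hd; elim: r => [|x r IH]; first by rewrite !big_nil xm0.
by rewrite !big_cons xmD // IH.
Qed.

Lemma xm_ore_mul (K : fieldType) (s d : {poly K} -> {poly K}) (q r : {poly {poly K}}) :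
  is_Kalg_endo s -> is_sigma_derivation s d ->
  ore_xmul s d (ore_mul s d q r) = ore_mul s d (ore_xmul s d q) r.
Proof.
move=> Hs Hd.
have hs : (size (map_poly s q) <= size q)%N by apply: size_map_le; exact: sig0.
have hd : (size (map_poly d q) <= size q)%N by apply: size_map_le; exact: (del0 Hd).
rewrite [in RHS]/ore_xmul ore_mulDl ore_mulX (ore_mulE _ _ _ hs) (ore_mulE _ _ _ hd).
rewrite /ore_mul xm_sum // -big_split /=; apply: eq_bigr => i _.
rewrite xmC // !coef_map_id0 ?(sig0 Hs) ?(del0 Hd) //.
by rewrite -iterSr iterS.
Qed.

Lemma iter_xm_ore_mul (K : fieldType) (s d : {poly K} -> {poly K}) k (q r : {poly {poly K}}) :
  is_Kalg_endo s -> is_sigma_derivation s d ->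
  iter k (ore_xmul s d) (ore_mul s d q r) = ore_mul s d (iter k (ore_xmul s d) q) r.
Proof.
move=> Hs Hd; elim: k => [|k IH] //.
by rewrite !iterS IH xm_ore_mul.
Qed.

Lemma ore_mulA (K : fieldType) (s d : {poly K} -> {poly K}) (p q r : {poly {poly K}}) :
  is_Kalg_endo s -> is_sigma_derivation s d ->
  ore_mul s d p (ore_mul s d q r) = ore_mul s d (ore_mul s d p q) r.
Proof.
move=> Hs Hd; rewrite [ore_mul s d p q]/ore_mul (big_morph (fun x => ore_mul s d x r) (fun a b => ore_mulDl s d a b r) (ore_mul0l s d r)).
rewrite [in LHS]/ore_mul.
apply: eq_bigr => i _; rewrite iter_xm_ore_mul // ore_mulCl.
done.
Qed.

Lemma size_sum_le (R : nzRingType) (m k : nat) (F : 'I_m -> {poly R}) :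
  (forall i, size (F i) <= k)%N -> (size (\sum_(i < m) F i)%R <= k)%N.
Proof.
move=> h; apply: (big_ind (fun x : {poly R} => size x <= k)%N) => //.
  by rewrite size_poly0.
by move=> x y hx hy; apply: leq_trans (size_polyD _ _) _; rewrite geq_max hx hy.
Qed.

Lemma ore_mul_size (K : fieldType) (s d : {poly K} -> {poly K}) (p q : {poly {poly K}}) :
  is_Kalg_endo s -> is_sigma_derivation s d -> (1 < size (s 'X))%N ->
  p != 0 -> q != 0 ->
  size (ore_mul s d p q) = (size p + size q).-1 /\
  lead_coef (ore_mul s d p q) = lead_coef p * iter (size p).-1 s (lead_coef q).
Proof.
move=> Hs Hd hX p0 q0.
set m := (size p).-1; have hp : size p = m.+1 by rewrite /m -polySpred.
rewrite (ore_mulE _ _ _ (leqnn _)) hp big_ord_recr /=.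
have [h1 h2] := iter_xm_size m Hs Hd hX q0.
have lp : lead_coef p != 0 by rewrite lead_coef_eq0.
have hl : size ((p`_m)%:P * iter m (ore_xmul s d) q) = (size q + m)%N.
  by rewrite size_Cmul -?lead_coefE /m // h1.
have hlt : (size (\sum_(i < m) (p`_i)%:P * iter i (ore_xmul s d) q)%R <
             size ((p`_m)%:P * iter m (ore_xmul s d) q)%R)%N.
  rewrite hl; case: m {hp h1 h2 hl} => [|m]; first by rewrite big_ord0 size_poly0 addn0 lt0n size_poly_eq0.
  rewrite addnS ltnS; apply: size_sum_le => i.
  rewrite mul_polyC; apply: leq_trans (size_scale_leq _ _) _.
  have [h3 _] := iter_xm_size i Hs Hd hX q0.
  by rewrite h3 leq_add2l -ltnS.
rewrite addrC size_addl // lead_coefDl // hl; split; first by rewrite addnC.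
by rewrite mul_polyC lead_coefZ h2 -lead_coefE.
Qed.

Lemma xm_const (K : fieldType) (s d : {poly K} -> {poly K}) (c : K) (Z : {poly {poly K}}) :
  is_Kalg_endo s -> is_sigma_derivation s d ->
  ore_xmul s d ((c%:P)%:P * Z) = (c%:P)%:P * ore_xmul s d Z.
Proof. by move=> Hs Hd; rewrite xmC // sigC // (delC _ Hs Hd) polyC0 mul0r addr0. Qed.

Lemma iter_xm_const (K : fieldType) (s d : {poly K} -> {poly K}) k (c : K) (Z : {poly {poly K}}) :
  is_Kalg_endo s -> is_sigma_derivation s d ->
  iter k (ore_xmul s d) ((c%:P)%:P * Z) = (c%:P)%:P * iter k (ore_xmul s d) Z.
Proof. by move=> Hs Hd; elim: k => [|k IH] //=; rewrite IH xm_const. Qed.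

Lemma ore_mul_constr (K : fieldType) (s d : {poly K} -> {poly K}) (p : {poly {poly K}}) (c : K) Z :
  is_Kalg_endo s -> is_sigma_derivation s d ->
  ore_mul s d p ((c%:P)%:P * Z) = (c%:P)%:P * ore_mul s d p Z.
Proof.
move=> Hs Hd; rewrite /ore_mul mulr_sumr; apply: eq_bigr => i _.
by rewrite iter_xm_const // mulrCA.
Qed.

Lemma iter_xm1 (K : fieldType) (s d : {poly K} -> {poly K}) k :
  is_Kalg_endo s -> is_sigma_derivation s d ->
  iter k (ore_xmul s d) 1 = 'X^k :> {poly {poly K}}.
Proof.
move=> Hs Hd; elim: k => [|k IH]; first by rewrite expr0.
rewrite iterS IH; apply/polyP => i; rewrite coef_xm // !coefXn.
have [_ _ s1 _] := Hs.
have d1 : d 1 = 0 by rewrite -polyC1 (delC _ Hs Hd).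
case: i => [|i] /=; rewrite ?add0r ?coefXn ?eqSS;
  do 2 case: (_ == _ :> nat); rewrite /= ?mulr1n ?mulr0n ?s1 ?d1 ?(sig0 Hs) ?(del0 Hd) ?addr0 ?add0r //.
Qed.

Lemma ore_mul1r (K : fieldType) (s d : {poly K} -> {poly K}) (p : {poly {poly K}}) :
  is_Kalg_endo s -> is_sigma_derivation s d -> ore_mul s d p 1 = p.
Proof.
move=> Hs Hd; rewrite /ore_mul -[RHS]coefK poly_def; apply: eq_bigr => i _.
by rewrite iter_xm1 // mul_polyC.
Qed.

Lemma const_comm (K : fieldType) (s d : {poly K} -> {poly K}) (p : {poly {poly K}}) (c : K) :
  is_Kalg_endo s -> is_sigma_derivation s d ->
  ore_mul s d p (c%:P)%:P = ore_mul s d (c%:P)%:P p.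
Proof.
move=> Hs Hd; rewrite -[(c%:P)%:P in LHS]mulr1 ore_mul_constr // ore_mul1r //.
by rewrite ore_mulC.
Qed.

Lemma size_eq_lemma (K : fieldType) (t : {poly K} -> {poly K}) (D : nat) (a b : {poly K}) :
  (1 < D)%N -> (forall f, (size (t f)).-1 = ((size f).-1 * D)%N) ->
  (forall f, f != 0 -> t f != 0) ->
  a != 0 -> b != 0 -> t a * b = t b * a -> size a = size b.
Proof.
move=> hD hs hnz a0 b0 e.
have h : size (t a * b) = size (t b * a) by rewrite e.
rewrite !size_mul ?hnz // in h.
have h1 := hs a; have h2 := hs b.
have e1 : size (t a) = ((size a).-1 * D).+1 by rewrite -h1 -polySpred ?hnz.
have e2 : size (t b) = ((size b).-1 * D).+1 by rewrite -h2 -polySpred ?hnz.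
rewrite e1 e2 (polySpred a0) (polySpred b0) !addSn !addnS /= in h *.
move: h; set A := (size a).-1; set B := (size b).-1 => h.
have : ((D - 1) * A = (D - 1) * B)%N by nia.
by move/eqP; rewrite eqn_mul2l subn_eq0 leqNgt hD /= => /eqP ->.

Qed.

Lemma prop_lemma (K : fieldType) (t : {poly K} -> {poly K}) (D : nat) (q q' : {poly K}) :
  is_Kalg_endo t ->
  (1 < D)%N -> (forall f, (size (t f)).-1 = ((size f).-1 * D)%N) ->
  (forall f, f != 0 -> t f != 0) ->
  q != 0 -> q' != 0 -> t q * q' = t q' * q -> exists c : K, q' = c *: q.
Proof.
move=> Ht hD hs hnz q0 q'0 e.
have eqs := size_eq_lemma hD hs hnz q0 q'0 e.
set c := lead_coef q' / lead_coef q.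
exists c; apply/eqP; rewrite -subr_eq0; apply/negPn/negP => r0.
set r := q' - c *: q in r0.
have lq : lead_coef q != 0 by rewrite lead_coef_eq0.
have hr : (size r < size q)%N.
  have hle : (size r <= size q)%N.
    apply: leq_trans (size_polyD _ _) _; rewrite geq_max -eqs leqnn /=.
    by rewrite size_polyN; apply: size_scale_leq.
  rewrite ltn_neqAle hle andbT; apply/negP => /eqP hsr.
  have : lead_coef r = 0.
    rewrite lead_coefE hsr coefB coefZ -lead_coefE eqs -lead_coefE.
    by rewrite /c divfK // subrr.
  by move/eqP; rewrite lead_coef_eq0 (negbTE r0).
have [tD tM t1 tZ] := Ht.
have tr : t r = t q' - c *: t q by rewrite /r tD sigN // tZ.
have e2 : t q * r = t r * q.
  by rewrite tr /r mulrBr mulrBl -e -!scalerAl -!scalerAr mulrC.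
have := size_eq_lemma hD hs hnz q0 r0 e2.
by move=> h; rewrite h ltnn in hr.
Qed.

Lemma gt1_exp (a k : nat) : (1 < a)%N -> (0 < k)%N -> (1 < a ^ k)%N.
Proof.
move=> ha; case: k => // k _; rewrite expnS; apply: (leq_trans ha).
by apply: leq_pmulr; rewrite expn_gt0 (ltnW ha).
Qed.

Lemma size_drop_top (R : nzRingType) (A : {poly R}) k :
  (size A <= k.+1)%N -> A`_k = 0 -> (size A <= k)%N.
Proof.
move=> h hk; apply/leq_sizeP => j; rewrite leq_eqVlt => /orP [/eqP <- //|hj].
by move/leq_sizeP: h; apply.
Qed.

Lemma reduce (K : fieldType) (s d : {poly K} -> {poly K}) (P Q Z : {poly {poly K}}) :
  is_Kalg_endo s -> is_sigma_derivation s d -> (2 < size (s 'X))%N ->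
  (0 < (size P).-1)%N ->
  centralizer s d P Q -> centralizer s d P Z -> Q != 0 -> Z != 0 -> size Q = size Z ->
  exists c : K, (size (Q - (c%:P)%:P * Z)%R < size Q)%N.
Proof.
move=> Hs Hd hX hn CQ CZ Q0 Z0 eqs.
have hX1 : (1 < size (s 'X))%N by apply: ltnW.
have P0 : P != 0 by rewrite -size_poly_eq0; case: (size P) hn.
set n := (size P).-1; set m := (size Q).-1.
set t := iter n s.
have [_ lPQ] := ore_mul_size Hs Hd hX1 P0 Q0.
have [_ lQP] := ore_mul_size Hs Hd hX1 Q0 P0.
have [_ lPZ] := ore_mul_size Hs Hd hX1 P0 Z0.
have [_ lZP] := ore_mul_size Hs Hd hX1 Z0 P0.
rewrite /centralizer in CQ CZ.
rewrite CQ lQP in lPQ; rewrite CZ lZP -eqs in lPZ.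
set p := lead_coef P in lPQ lPZ; set qQ := lead_coef Q in lPQ lPZ *.
set qZ := lead_coef Z in lPQ lPZ.
have p0 : p != 0 by rewrite lead_coef_eq0.
have qQ0 : qQ != 0 by rewrite lead_coef_eq0.
have qZ0 : qZ != 0 by rewrite lead_coef_eq0.
have e : t qZ * qQ = t qQ * qZ.
  apply: (mulfI p0); rewrite mulrA -lPZ mulrA -lPQ.
  by rewrite mulrAC [RHS]mulrAC [qZ * qQ]mulrC.
have Ht := iter_endo n Hs.
have hD : (1 < (size (s 'X)).-1 ^ n)%N by apply: gt1_exp => //; rewrite -ltnS prednK // ltnW.
have [c hc] := prop_lemma Ht hD (fun f => iter_size n f Hs)
  (fun f (hf : f != 0) => (negbT (etrans (iter_eq0 n f Hs hX1) (negbTE hf)))) qZ0 qQ0 e.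
exists c.
have hle : (size (Q - (c%:P)%:P * Z)%R <= (size Q).-1.+1)%N.
  rewrite -polySpred //; apply: leq_trans (size_polyD _ _) _; rewrite geq_max leqnn /=.
  by rewrite size_polyN eqs mul_polyC size_scale_leq.
rewrite [X in (_ < X)%N](polySpred Q0) ltnS; apply: size_drop_top => //.
rewrite coefB coefCM -/m.
have -> : Z`_m = qZ by rewrite /qZ lead_coefE -eqs.
have -> : Q`_m = qQ by rewrite /qQ lead_coefE.
by rewrite hc -mul_polyC subrr.
Qed.

Lemma C_add (K : fieldType) (s d : {poly K} -> {poly K}) (P A B : {poly {poly K}}) :
  is_Kalg_endo s -> is_sigma_derivation s d ->
  centralizer s d P A -> centralizer s d P B -> centralizer s d P (A + B).
Proof. by move=> Hs Hd hA hB; rewrite /centralizer ore_mulDr // ore_mulDl hA hB. Qed.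

Lemma C_mul (K : fieldType) (s d : {poly K} -> {poly K}) (P A B : {poly {poly K}}) :
  is_Kalg_endo s -> is_sigma_derivation s d ->
  centralizer s d P A -> centralizer s d P B -> centralizer s d P (ore_mul s d A B).
Proof.
move=> Hs Hd hA hB; rewrite /centralizer ore_mulA // hA -ore_mulA // hB ore_mulA //.
Qed.

Lemma C_const (K : fieldType) (s d : {poly K} -> {poly K}) (P : {poly {poly K}}) c :
  is_Kalg_endo s -> is_sigma_derivation s d -> centralizer s d P (c%:P)%:P.
Proof. by move=> Hs Hd; rewrite /centralizer const_comm. Qed.

Lemma C_zero (K : fieldType) (s d : {poly K} -> {poly K}) (P : {poly {poly K}}) :
  is_Kalg_endo s -> is_sigma_derivation s d -> centralizer s d P 0.
Proof. by move=> Hs Hd; rewrite /centralizer ore_mul0r // ore_mul0l. Qed.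

Lemma min_exists (T : Type) (Pr : T -> Prop) (f : T -> nat) :
  (exists x, Pr x) -> exists x, Pr x /\ forall y, Pr y -> (f x <= f y)%N.
Proof.
move=> [x0 Px0]; apply: NNPP => hno.
suff H : forall k x, Pr x -> (k <= f x)%N.
  by have := H (f x0).+1 x0 Px0; rewrite ltnn.
elim=> [//|k IH] x Px; rewrite ltnNge; apply/negP => hle.
apply: hno; exists x; split => // y Py; have := IH y Py.
by move=> h; apply: leq_trans hle h.
Qed.
Unset Implicit Arguments.

Theorem corollary5p1 (K : fieldType) (sigma delta : {poly K} -> {poly K})
    (Hsigma : is_Kalg_endo sigma) (Hdeg : (2 < size (sigma 'X))%N)
    (Hdelta : is_sigma_derivation sigma delta)
    (P : {poly {poly K}}) (n : nat) (HPdeg : (size P).-1 = n) (Hn : (0 < n)%N) :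
  exists g : 'I_n -> {poly {poly K}},
    forall Q, centralizer sigma delta P Q <->
              in_gen_alg sigma delta (fun R => exists i, R = g i) Q.
Proof.
set C := centralizer sigma delta P.
have hX1 : (1 < size (sigma 'X))%N by apply: ltnW.
have P0 : P != 0 by apply/eqP => h; move: Hn; rewrite -HPdeg h size_poly0.
have hPs : size P = n.+1 by rewrite -HPdeg -polySpred.
pose Good (i : nat) (Z : {poly {poly K}}) := C Z /\ Z != 0 /\ ((size Z).-1 %% n)%N = i.
pose Spec (i : nat) (G : {poly {poly K}}) :=
  (i = 0%N -> G = P) /\
  (i <> 0%N -> (G = 0 /\ ~ exists Z, Good i Z) \/
                (Good i G /\ forall Z, Good i Z -> (size G <= size Z)%N)).
have hex : forall i : 'I_n, exists G, Spec i G.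
  move=> i; case: (eqVneq (i : nat) 0%N) => hi.
    by exists P; split => // h; case: (h hi).
  case: (classic (exists Z, Good i Z)) => hZ.
    have [G [hG hmin]] := @min_exists {poly {poly K}} (Good i) (fun Z => size Z) hZ.
    by exists G; split => [h|_]; [move: hi; rewrite h | right].
  by exists 0; split => [h|_]; [move: hi; rewrite h | left].
pose g (i : 'I_n) := proj1_sig (constructive_indefinite_description _ (hex i)).
have hg : forall i : 'I_n, Spec i (g i) := fun i => proj2_sig (constructive_indefinite_description _ (hex i)).
exists g.
set gen := in_gen_alg sigma delta (fun R => exists i, R = g i).
have genP : gen P.
  apply: ga_gen; exists (Ordinal Hn); by have [-> //] := hg (Ordinal Hn).
have CP : C P by [].
have powP : forall k G, C G -> gen G -> G != 0 ->
    C (iter k (ore_mul sigma delta P) G) /\ gen (iter k (ore_mul sigma delta P) G) /\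
    iter k (ore_mul sigma delta P) G != 0 /\
    size (iter k (ore_mul sigma delta P) G) = (size G + k * n)%N.
  move=> k G CG gG G0; elim: k => [|k [CZ [gZ [Z0 sZ]]]]; first by rewrite addn0.
  have [s1 _] := ore_mul_size Hsigma Hdelta hX1 P0 Z0.
  rewrite /=; split; first exact: C_mul.
  split; first exact: ga_mul.
  rewrite -size_poly_eq0 s1 hPs sZ addSn /= mulSn.
  split; first by rewrite addn_eq0 negb_and -lt0n Hn.
  by rewrite addnCA.
move=> Q; split.
-
  move: Q => Qx CQx.
  suff H : forall k (Q : {poly {poly K}}), (size Q <= k)%N -> C Q -> gen Q by exact: H Qx (leqnn _) CQx.
  elim=> [|k IH] Q hk CQ'.
    move: hk; rewrite leqn0 size_poly_eq0 => /eqP ->.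
    by rewrite -[0]polyC0 -polyC0; apply: ga_const.
  have [->|Q0] := eqVneq Q 0.
    by rewrite -[0]polyC0 -polyC0; apply: ga_const.
  set m := (size Q).-1.
  have [G [CG [gG [G0 [hGm hGle]]]]] : exists G, C G /\ gen G /\ G != 0 /\
      ((size G).-1 %% n = m %% n)%N /\ (size G <= size Q)%N.
    case: (eqVneq (m %% n)%N 0%N) => hr.
      exists 1; split; first by rewrite -polyC1 -polyC1; apply: C_const.
      split; first by rewrite -polyC1 -polyC1; apply: ga_const.
      split; first exact: oner_neq0.
      by rewrite size_poly1 /= mod0n hr size_poly_gt0.
    have hi : (m %% n < n)%N by rewrite ltn_pmod.
    have [_ /(_ (elimN eqP hr))] := hg (Ordinal hi).
    case=> [[_ hno]|[[CG [G0 hG]] hmin]].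
      by exfalso; apply: hno; exists Q.
    exists (g (Ordinal hi)); split => //; split; first by apply: ga_gen; exists (Ordinal hi).
    by split => //; split; [rewrite hG | apply: hmin].
  have hdeg : ((size G).-1 <= m)%N by rewrite /m -!subn1 leq_sub2r.
  have hdvd : (n %| m - (size G).-1)%N by rewrite -eqn_mod_dvd // hGm.
  set kk := ((m - (size G).-1) %/ n)%N.
  have [CZ [gZ [Z0 sZ]]] := powP kk G CG gG G0.
  set Z := iter kk (ore_mul sigma delta P) G in CZ gZ Z0 sZ.
  have eqs : size Q = size Z.
    rewrite sZ /kk divnK // (polySpred G0) addSn /= subnKC //.
    by rewrite /m -polySpred.
  have hn1 : (0 < (size P).-1)%N by rewrite HPdeg.
  have [c hc] := reduce Hsigma Hdelta Hdeg hn1 CQ' CZ Q0 Z0 eqs.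
  have CR : C (Q + ore_mul sigma delta ((- c)%:P)%:P Z).
    by apply: C_add => //; apply: C_mul => //; apply: C_const.
  have gR : gen (Q + ore_mul sigma delta ((- c)%:P)%:P Z).
    apply: IH CR; rewrite ore_mulC !polyCN mulNr -ltnS.
    by apply: leq_trans hc _.
  have -> : Q = (Q + ore_mul sigma delta ((- c)%:P)%:P Z) + ore_mul sigma delta (c%:P)%:P Z.
    by rewrite !ore_mulC !polyCN mulNr addrNK.
  by apply: ga_add => //; apply: ga_mul => //; apply: ga_const.
-
  elim=> [c|R [i ->]|Q1 Q2 _ h1 _ h2|Q1 Q2 _ h1 _ h2].
  + exact: C_const.
  + have [h0 h1] := hg i.
    case: (eqVneq (i : nat) 0%N) => hi; first by rewrite h0 //; apply/eqP.
    case: (h1 (elimN eqP hi)) => [[-> _]|[[CG _] _] //].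
    exact: C_zero.
  + exact: C_add.
  + exact: C_mul.
Qed.
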